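(* Let $N\ge 2$, let $T_N$ be the homogeneous tree in which every vertex has degree $N$, and fix a root $o$. Let $m>1$ and $(p,q)\in G_4=\{(p,q): p<0,\ q=m-1\}$. Then for every $\lambda>0$ there exists a weight $\mu$ on $T_N$ such that $$W_o(n)\asymp e^{\lambda n}\quad\text{for } n\ge 2,$$ and the inequality $\Delta_m u+u^p|\nabla u|^q\le 0$ on $T_N$ admits a nontrivial positive solution.
   Context: A weight on a graph $(V,E)$ is a symmetric function $\mu:V\times V\to[0,\infty)$ with $\mu_{xy}=\mu_{yx}>0$ if and only if $x\sim y$ (adjacent); $\mu(x)=\sum_{y\sim x}\mu_{xy}$. For $m>1$, $\Delta_m u(x)=\frac{1}{\mu(x)}\sum_{y\sim x}\mu_{xy}|u(y)-u(x)|^{m-2}(u(y)-u(x))$ and $|\nabla u(x)|=\big(\sum_{y\sim x}\frac{\mu_{xy}}{2\mu(x)}(u(y)-u(x))^2\big)^{1/2}$. $d$ is the graph distance, $B(o,n)=\{x: d(o,x)\le n\}$, $W_o(n)=\sum_{x\in B(o,n),\,y\in V,\,d(o,x)<d(o,y)}\mu_{xy}$. $f(n)\asymp g(n)$ for $n\ge2$ means there are constants $c,C>0$ with $c\,g(n)\le f(n)\le C\,g(n)$ for all $n\ge 2$. A nontrivial positive solution is a non-constant $u:V\to(0,\infty)$ with $\Delta_m u(x)+u(x)^p|\nabla u(x)|^q\le0$ for all $x\in V$. *)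

(* Defs.v *)
From HB Require Import structures.
From mathcomp Require Import all_boot all_order all_algebra.
From mathcomp Require Import all_classical all_reals all_analysis.
Set Implicit Arguments. Unset Strict Implicit. Unset Printing Implicit Defensive.
Import Order.TTheory GRing.Theory Num.Theory.
Local Open Scope ring_scope.

(* Vertices are words s : seq nat; the root has N children (letters < N),
   every other vertex has N-1 children (letters < N-1). *)

Definition nchild (N : nat) (s : seq nat) : nat :=
  if s is [::] then N else N.-1.

Definition is_vertex (N : nat) (s : seq nat) : bool :=
  match s with
  | [::] => true
  | a :: t => (a < N)%N && all (fun b => (b < N.-1)%N) t
  end.

Definition child (x y : seq nat) : bool :=
  (size y == (size x).+1) && (x == take (size x) y).

Definition adj (N : nat) (x y : seq nat) : bool :=
  [&& is_vertex N x, is_vertex N y & child x y || child y x].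

Definition nbrs (N : nat) (x : seq nat) : seq (seq nat) :=
  (if x is [::] then [::] else [:: take (size x).-1 x])
    ++ [seq rcons x i | i <- iota 0 (nchild N x)].

Definition root_o : seq nat := [::].

Definition dist_o (x : seq nat) : nat := size x.

Fixpoint level (N : nat) (k : nat) : seq (seq nat) :=
  match k with
  | 0 => [:: root_o]
  | k'.+1 => flatten [seq [seq rcons x i | i <- iota 0 (nchild N x)]
                     | x <- level N k']
  end.

Definition ball (N : nat) (n : nat) : seq (seq nat) :=
  flatten [seq level N k | k <- iota 0 n.+1].

Section Weights.
Variable R : realType.

Definition is_weight (N : nat) (mu : seq nat -> seq nat -> R) : Prop :=
  (forall x y, mu x y = mu y x) /\
  (forall x y, 0 <= mu x y) /\
  (forall x y, 0 < mu x y <-> adj N x y).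

Definition mu_v (N : nat) (mu : seq nat -> seq nat -> R) (x : seq nat) : R :=
  \sum_(y <- nbrs N x) mu x y.

(* W_o(n) = sum_{x in B(o,n), y in V, d(o,x) < d(o,y)} mu_xy ;
   only neighbours y of x contribute since mu_xy = 0 otherwise *)
Definition W_o (N : nat) (mu : seq nat -> seq nat -> R) (n : nat) : R :=
  \sum_(x <- ball N n) \sum_(y <- nbrs N x | (dist_o x < dist_o y)%N) mu x y.

Definition mLap (N : nat) (mu : seq nat -> seq nat -> R) (m : R)
    (u : seq nat -> R) (x : seq nat) : R :=
  (mu_v N mu x)^-1 *
  \sum_(y <- nbrs N x) mu x y * powR `|u y - u x| (m - 2) * (u y - u x).

Definition grad_norm (N : nat) (mu : seq nat -> seq nat -> R)
    (u : seq nat -> R) (x : seq nat) : R :=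
  Num.sqrt (\sum_(y <- nbrs N x) mu x y / (2 * mu_v N mu x) * (u y - u x) ^+ 2).

Definition nontrivial_pos_sol (N : nat) (mu : seq nat -> seq nat -> R)
    (m p q : R) (u : seq nat -> R) : Prop :=
  (forall x, is_vertex N x -> 0 < u x) /\
  (exists x y, [/\ is_vertex N x, is_vertex N y & u x != u y]) /\
  (forall x, is_vertex N x ->
     mLap N mu m u x + powR (u x) p * powR (grad_norm N mu u x) q <= 0).

End Weights.

(* Main.v *)
Require Import Defs.
From HB Require Import structures.
From mathcomp Require Import all_boot all_order all_algebra.
From mathcomp Require Import all_classical all_reals all_analysis.
From mathcomp Require Import ring lra.
Import Order.TTheory GRing.Theory Num.Theory.
Set Implicit Arguments. Unset Strict Implicit.
Local Open Scope ring_scope.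

Lemma vertex_rcons N x i : is_vertex N x -> (i < nchild N x)%N ->
  is_vertex N (rcons x i).
Proof.
case: x => [|a t] /=; first by move=> _ ->.
by case/andP=> -> Ht Hi; rewrite all_rcons Hi Ht.
Qed.

Lemma vertex_take N x n : is_vertex N x -> is_vertex N (take n x).
Proof.
case: x => [|a t] //; case: n => [|n] //= /andP[Ha H].
rewrite Ha /=.
by move: H; rewrite -{1}(cat_take_drop n t) all_cat => /andP[].
Qed.

Lemma child_rcons x i : child x (rcons x i).
Proof. by rewrite /child size_rcons eqxx -cats1 take_size_cat // eqxx. Qed.

Lemma child_parent x : x != [::] -> child (take (size x).-1 x) x.
Proof.
case: x => [|a t] // _.
rewrite /child size_takel ?leq_pred // prednK //.
by rewrite !eqxx.
Qed.

Lemma adjC N x y : adj N x y = adj N y x.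
Proof.
rewrite /adj; by case: (is_vertex N x); case: (is_vertex N y);
  case: (child x y); case: (child y x).
Qed.

Lemma level_prop N k x : x \in level N k -> is_vertex N x && (size x == k).
Proof.
elim: k x => [|k IH] x /=; first by rewrite inE => /eqP->.
case/flattenP=> s /mapP[y Hy ->] /mapP[i]; rewrite mem_iota add0n => /andP[_ Hi] ->.
case/andP: (IH y Hy) => Vy /eqP Sy.
by rewrite vertex_rcons // size_rcons Sy eqxx.
Qed.

Lemma size_level_succ N k :
  size (level N k.+1) = (\sum_(x <- level N k) nchild N x)%N.
Proof.
rewrite /= size_flatten /shape -map_comp sumnE big_map.
by apply: eq_bigr => x _; rewrite /= size_map size_iota.
Qed.

Section Real.
Variable R : realType.
Variable N : nat.
Variable w : nat -> R.

Definition muw (x y : seq nat) : R :=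
  if adj N x y then w (minn (size x) (size y)) else 0.

Lemma sumr_const_seq (T : Type) (l : seq T) (c : R) :
  \sum_(x <- l) c = (size l)%:R * c.
Proof.
elim: l => [|a l IH]; first by rewrite big_nil mul0r.
by rewrite big_cons IH /= -add1n natrD mulrDl mul1r.
Qed.

Lemma adj_parent x : is_vertex N x -> x != [::] ->
  adj N x (take (size x).-1 x).
Proof.
move=> Vx nx; by rewrite /adj Vx vertex_take // child_parent // orbT.
Qed.

Lemma adj_rcons x i : is_vertex N x -> (i < nchild N x)%N -> adj N x (rcons x i).
Proof. by move=> Vx Hi; rewrite /adj Vx vertex_rcons // child_rcons. Qed.

Lemma nbrs_succ (F : R -> nat -> R) x k : is_vertex N x -> size x = k.+1 ->
  \sum_(y <- nbrs N x) F (muw x y) (size y) = F (w k) k + (N.-1)%:R * F (w k.+1) k.+2.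
Proof.
case: x => [|a t] // Vx Sx.
have nx : a :: t != [::] by [].
rewrite /nbrs big_cat big_seq1 big_map.
have Sp : size (take (size (a :: t)).-1 (a :: t)) = k.
  by rewrite size_takel ?leq_pred // Sx.
rewrite /muw adj_parent // Sp Sx (minn_idPr (leqnSn k)).
congr (_ + _).
have -> : nchild N (a :: t) = N.-1 by [].
rewrite -[in RHS](size_iota 0 N.-1) -sumr_const_seq.
apply: eq_big_seq => i; rewrite mem_iota add0n => /andP[_ Hi].
by rewrite adj_rcons // size_rcons Sx (minn_idPl (leqnSn _)).
Qed.

Lemma nbrs_root (F : R -> nat -> R) :
  \sum_(y <- nbrs N [::]) F (muw [::] y) (size y) = N%:R * F (w 0) 1.
Proof.
rewrite /nbrs /= big_map.
rewrite -[in RHS](size_iota 0 N) -sumr_const_seq.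
apply: eq_big_seq => i; rewrite mem_iota add0n => /andP[_ Hi].
by rewrite /muw -[[:: i]]cat0s -[_ ++ _]/(rcons [::] i) adj_rcons.
Qed.

Lemma inner_sum x : is_vertex N x ->
  \sum_(y <- nbrs N x | (dist_o x < dist_o y)%N) muw x y
    = (nchild N x)%:R * w (size x).
Proof.
move=> Vx.
have Hc : \sum_(i <- iota 0 (nchild N x) | (dist_o x < dist_o (rcons x i))%N)
     muw x (rcons x i) = (nchild N x)%:R * w (size x).
  rewrite (eq_bigl xpredT); last by move=> i; rewrite /dist_o size_rcons ltnSn.
  rewrite -[in RHS](size_iota 0 (nchild N x)) -sumr_const_seq.
  apply: eq_big_seq => i; rewrite mem_iota add0n => /andP[_ Hi].
  by rewrite /muw adj_rcons // size_rcons (minn_idPl (leqnSn _)).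
case: x Vx Hc => [|a t] Vx Hc; first by rewrite /nbrs /= big_map.
rewrite /nbrs big_cat big_map Hc big_cons big_nil.
rewrite /dist_o size_takel ?leq_pred //= ltnNge leqnSn /= add0r.
by [].
Qed.

End Real.

Section Growth.
Variable R : realType.
Variable N : nat.
Hypothesis N2 : (2 <= N)%N.
Variable q : R.

Definition Lk (k : nat) : R := (size (level N k))%:R.

Lemma Lsucc k : Lk k.+1 = \sum_(x <- level N k) (nchild N x)%:R.
Proof. by rewrite /Lk size_level_succ natr_sum. Qed.

Lemma L1 : Lk 1 = N%:R.
Proof. by rewrite Lsucc /= big_seq1. Qed.

Lemma LSS k : Lk k.+2 = Lk k.+1 * (N.-1)%:R.
Proof.
rewrite Lsucc -[in RHS]sumr_const_seq.
apply: eq_big_seq => x /level_prop /andP[_ /eqP].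
by case: x.
Qed.

Lemma Lpos k : 0 < Lk k.
Proof.
case: k => [|k]; first by rewrite /Lk /= ltr01.
elim: k => [|k IH]; first by rewrite L1 ltr0n; apply: leq_trans N2.
rewrite LSS mulr_gt0 // ltr0n; case: N N2 => [|[|n]] //.
Qed.

Definition wq (k : nat) : R := q ^+ k / Lk k.+1.

Lemma W_o_eq n :
  W_o N (muw N wq) n = \sum_(k <- iota 0 n.+1) q ^+ k.
Proof.
rewrite /W_o /ball big_flatten big_map.
apply: eq_bigr => k _.
rewrite (eq_big_seq (fun x => (nchild N x)%:R * wq k)); last first.
  move=> x /level_prop /andP[Vx /eqP Sx].
  by rewrite inner_sum // Sx.
rewrite -mulr_suml -Lsucc /wq mulrC divfK //.
by rewrite gt_eqF // Lpos.
Qed.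

Lemma wq_pos k : 0 < q -> 0 < wq k.
Proof. by move=> q0; rewrite /wq divr_gt0 ?exprn_gt0 ?Lpos. Qed.

Lemma wq_root : N%:R * wq 0 = 1.
Proof. by rewrite /wq expr0 L1 mul1r divff // pnatr_eq0 -lt0n; apply: leq_trans N2. Qed.

Lemma wq_ratio k : (N.-1)%:R * wq k.+1 = q * wq k.
Proof.
rewrite /wq LSS exprS.
have h1 : (N.-1)%:R != 0 :> R by rewrite pnatr_eq0; case: N N2 => [|[|n]].
have h2 : Lk k.+1 != 0 by rewrite gt_eqF // Lpos.
by field; rewrite h1 andbT.
Qed.

End Growth.

Lemma geom_bounds (R : realType) (q : R) n : 1 < q ->
  q ^+ n <= \sum_(k <- iota 0 n.+1) q ^+ k <= q / (q - 1) * q ^+ n.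
Proof.
move=> q1.
have q0 : 0 < q by apply: lt_trans q1.
have qm : 0 < q - 1 by rewrite subr_gt0.
apply/andP; split.
  rewrite -addn1 iotaD big_cat /= big_seq1 lerDr.
  by apply: sumr_ge0 => i _; rewrite exprn_ge0 // ltW.
elim: n => [|n IH].
  rewrite /= big_seq1 expr0 mulr1 ler_pdivlMr //; lra.
rewrite -addn1 iotaD big_cat big_seq1 add0n.
apply: le_trans (lerD IH (lexx (q ^+ n.+1))) _.
have -> : q / (q - 1) * q ^+ n + q ^+ n.+1 = q / (q - 1) * q ^+ n.+1.
  rewrite exprS; have h : q - 1 != 0 by rewrite gt_eqF.
  by field.
by [].
Qed.

Section PDE.
Variable R : realType.
Variable N : nat.
Hypothesis N2 : (2 <= N)%N.
Variables (m p q s c eps : R).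
Hypothesis m1 : 1 < m.
Hypothesis q0 : 0 < q.
Hypothesis s0 : 0 < s.
Hypothesis s1 : s < 1.
Hypothesis c0 : 0 < c.
Hypothesis eps_def : eps = (q * powR s (m - 1) - 1) / (1 + q).
Hypothesis eps0 : 0 < eps.
Hypothesis eps1 : eps <= 1.
Hypothesis Hc : forall z, c <= z -> powR z p <= eps.

Definition mu0 := muw N (wq N q).
Definition uu (x : seq nat) : R := c + s ^+ size x.

Lemma pw d : 0 <= d -> powR d (m - 2) * d = powR d (m - 1).
Proof.
move=> d0; have m0 : 0 < m - 1 by rewrite subr_gt0.
rewrite mulrC -(mulr_powRB1 d0 m0).
by congr (_ * powR _ _); ring.
Qed.

Lemma pwN d : 0 <= d -> powR `|- d| (m - 2) * (- d) = - powR d (m - 1).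
Proof. by move=> d0; rewrite normrN ger0_norm // mulrN pw. Qed.

Lemma pwP d : 0 <= d -> powR `|d| (m - 2) * d = powR d (m - 1).
Proof. by move=> d0; rewrite ger0_norm // pw. Qed.

Lemma pwPa a d : 0 <= d -> a * powR `|d| (m - 2) * d = a * powR d (m - 1).
Proof. by move=> d0; rewrite -mulrA pwP. Qed.

Lemma pwNa a d : 0 <= d -> a * powR `|- d| (m - 2) * (- d) = - (a * powR d (m - 1)).
Proof. by move=> d0; rewrite -mulrA pwN // mulrN. Qed.

Lemma uu_ge x : c <= uu x.
Proof. by rewrite /uu lerDl exprn_ge0 // ltW. Qed.

Lemma final_step (E P G : R) : 0 <= P -> eps <= E ->
  0 <= G -> G <= P ->
  forall z, c <= z -> - (E * P) + powR z p * G <= 0.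
Proof.
move=> P0 eE G0 GP z cz.
rewrite addrC subr_le0.
apply: le_trans (ler_pM (powR_ge0 _ _) G0 (Hc cz) GP) _.
by rewrite ler_wpM2r.
Qed.

Lemma pde_succ x k : is_vertex N x -> size x = k.+1 ->
  mLap N mu0 m uu x + powR (uu x) p * powR (grad_norm N mu0 uu x) (m - 1) <= 0.
Proof.
move=> Vx Sx.
set W := wq N q k.
set w1 := wq N q k.+1.
have W0 : 0 < W by apply: wq_pos.
have r : (N.-1)%:R * w1 = q * W by apply: wq_ratio.
have ux : uu x = c + s ^+ k.+1 by rewrite /uu Sx.
set d := s ^+ k * (1 - s).
have d0 : 0 <= d by rewrite mulr_ge0 ?exprn_ge0 ?subr_ge0 // ltW.
set t := powR s (m - 1).
set P := powR d (m - 1).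
have e1 : c + s ^+ k - (c + s ^+ k.+1) = d by rewrite /d exprS; ring.
have e2 : c + s ^+ k.+2 - (c + s ^+ k.+1) = - (s * d) by rewrite /d !exprS; ring.
have sd0 : 0 <= s * d by rewrite mulr_ge0 // ltW.
have Pt : powR (s * d) (m - 1) = t * P by rewrite powRM // ltW.
have Emu : mu_v N mu0 x = W * (1 + q).
  have E := nbrs_succ (wq N q) (fun a (_ : nat) => a) Vx Sx.
  cbv beta in E; rewrite /mu_v; apply: eq_trans E _.
  by rewrite r /W; ring.
have Elap : \sum_(y <- nbrs N x) mu0 x y * powR `|uu y - uu x| (m - 2) * (uu y - uu x)
    = W * P * (1 - q * t).
  have E := nbrs_succ (wq N q)
    (fun a j => a * powR `|c + s ^+ j - uu x| (m - 2) * (c + s ^+ j - uu x)) Vx Sx.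
  cbv beta in E; apply: eq_trans E _.
  rewrite ux e1 e2 pwPa // pwNa // Pt.
  have -> : (N.-1)%:R * - (w1 * (t * P)) = - (((N.-1)%:R * w1) * t * P) by ring.
  by rewrite r /P /W; ring.
have Egr : \sum_(y <- nbrs N x) mu0 x y / (2 * mu_v N mu0 x) * (uu y - uu x) ^+ 2
    = d ^+ 2 * ((1 + q * s ^+ 2) / (2 * (1 + q))).
  have E := nbrs_succ (wq N q)
    (fun a j => a / (2 * mu_v N mu0 x) * (c + s ^+ j - uu x) ^+ 2) Vx Sx.
  cbv beta in E; apply: eq_trans E _.
  rewrite ux e1 e2 Emu -/W -/w1.
  have -> : (N.-1)%:R * (w1 / (2 * (W * (1 + q))) * (- (s * d)) ^+ 2)
     = ((N.-1)%:R * w1) / (2 * (W * (1 + q))) * (- (s * d)) ^+ 2 by ring.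
  rewrite r.
  have h1 : W != 0 by rewrite gt_eqF.
  have h2 : 1 + q != 0 by rewrite gt_eqF // addr_gt0.
  by field; rewrite h1 h2.
have gle : grad_norm N mu0 uu x <= d.
  rewrite /grad_norm Egr -[X in _ <= X](ger0_norm d0) -sqrtr_sqr.
  apply: ler_wsqrtr; apply: ler_piMr; first by rewrite exprn_ge0.
  rewrite ler_pdivrMr; last by rewrite mulr_gt0 // addr_gt0.
  have s2 : s ^+ 2 <= 1 by rewrite expr_le1 // ltW.
  have : q * s ^+ 2 <= q by rewrite ler_piMr // ltW.
  move=> h; rewrite mul1r mulrDr mulr1 mulr_natl mulr2n.
  apply: lerD; first by rewrite ler_wpDl // ler01. 
  by apply: le_trans h _; rewrite lerDr ltW.
have Gle : powR (grad_norm N mu0 uu x) (m - 1) <= P.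
  apply: ge0_ler_powR; rewrite ?nnegrE ?sqrtr_ge0 //.
  by rewrite subr_ge0 ltW.
have Elap2 : mLap N mu0 m uu x = - (eps * P).
  rewrite /mLap Elap Emu eps_def -/t.
  have h1 : W != 0 by rewrite gt_eqF.
  have h2 : 1 + q != 0 by rewrite gt_eqF // addr_gt0.
  by field; rewrite h1 h2.
rewrite Elap2; apply: final_step => //.
- by rewrite powR_ge0.
- by rewrite powR_ge0.
- exact: uu_ge.
Qed.

Lemma pde_root :
  mLap N mu0 m uu [::] + powR (uu [::]) p * powR (grad_norm N mu0 uu [::]) (m - 1) <= 0.
Proof.
have r : N%:R * wq N q 0 = 1 by apply: wq_root.
have ux : uu [::] = c + s ^+ 0 by [].
set d := 1 - s.
have d0 : 0 <= d by rewrite subr_ge0 ltW.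
set P := powR d (m - 1).
have e2 : c + s ^+ 1 - (c + s ^+ 0) = - d by rewrite /d expr1 expr0; ring.
have Emu : mu_v N mu0 [::] = 1.
  have E := nbrs_root N (wq N q) (fun a (_ : nat) => a).
  cbv beta in E; rewrite /mu_v; apply: eq_trans E _.
  by rewrite r.
have Elap : \sum_(y <- nbrs N [::]) mu0 [::] y * powR `|uu y - uu [::]| (m - 2) * (uu y - uu [::])
    = - P.
  have E := nbrs_root N (wq N q)
    (fun a j => a * powR `|c + s ^+ j - uu [::]| (m - 2) * (c + s ^+ j - uu [::])).
  cbv beta in E; apply: eq_trans E _.
  rewrite ux e2 pwNa // mulrN mulrA r mul1r.
  by [].
have Egr : \sum_(y <- nbrs N [::]) mu0 [::] y / (2 * mu_v N mu0 [::]) * (uu y - uu [::]) ^+ 2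
    = d ^+ 2 / 2.
  have E := nbrs_root N (wq N q)
    (fun a j => a / (2 * mu_v N mu0 [::]) * (c + s ^+ j - uu [::]) ^+ 2).
  cbv beta in E; apply: eq_trans E _.
  rewrite ux e2 Emu sqrrN mulr1.
  have -> : N%:R * (wq N q 0 / 2 * d ^+ 2) = (N%:R * wq N q 0) / 2 * d ^+ 2 by ring.
  by rewrite r mul1r mulrC.
have gle : grad_norm N mu0 uu [::] <= d.
  rewrite /grad_norm Egr -[X in _ <= X](ger0_norm d0) -sqrtr_sqr.
  apply: ler_wsqrtr; rewrite ler_pdivrMr // ler_peMr ?exprn_ge0 //.
  by rewrite ler1n.
have Gle : powR (grad_norm N mu0 uu [::]) (m - 1) <= P.
  apply: ge0_ler_powR; rewrite ?nnegrE ?sqrtr_ge0 //.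
  by rewrite subr_ge0 ltW.
have Elap2 : mLap N mu0 m uu [::] = - (1 * P).
  by rewrite /mLap Elap Emu invr1 !mul1r.
rewrite Elap2; apply: final_step => //.
- by rewrite powR_ge0.
- by rewrite powR_ge0.
- exact: uu_ge.
Qed.

End PDE.

Unset Implicit Arguments.

Theorem mainTheorem11 (R : realType) (N : nat) (m p q : R) :
  (2 <= N)%N -> 1 < m -> p < 0 -> q = m - 1 ->
  forall lambda : R, 0 < lambda ->
  exists mu : seq nat -> seq nat -> R,
    [/\ is_weight N mu,
        (exists c C : R, [/\ 0 < c, 0 < C &
           forall n : nat, (2 <= n)%N ->
             c * expR (lambda * n%:R) <= W_o N mu n <= C * expR (lambda * n%:R)]) &
        exists u : seq nat -> R, nontrivial_pos_sol N mu m p q u].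
Proof.
move=> N2 m1 p0 qdef lam lam0.
set Q := expR lam.
have Q1 : 1 < Q by rewrite /Q expR_gt1.
have Q0 : 0 < Q by apply: lt_trans Q1.
have m0 : 0 < m - 1 by rewrite subr_gt0.
set s := expR (- (lam / (2 * (m - 1)))).
have s0 : 0 < s by apply: expR_gt0.
have s1 : s < 1.
  rewrite /s expR_lt1 oppr_lt0 divr_gt0 // mulr_gt0 //.
set t := powR s (m - 1).
have ht : t = expR (- (lam / 2)).
  rewrite /t /s -expRM; congr expR.
  have h : m - 1 != 0 by rewrite gt_eqF.
  by field.
have Qt : 1 < Q * t.
  rewrite ht /Q -expRD expR_gt1.
  have -> : lam + - (lam / 2) = lam / 2 by field.
  by rewrite divr_gt0.
have t1 : t <= 1 by rewrite ht ltW // expR_lt1 oppr_lt0 divr_gt0.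
set eps := (Q * t - 1) / (1 + Q).
have eps0 : 0 < eps by rewrite /eps divr_gt0 ?subr_gt0 // addr_gt0.
have eps1 : eps <= 1.
  rewrite /eps ler_pdivrMr ?addr_gt0 // mul1r.
  have : Q * t <= Q by rewrite ler_piMr // ltW.
  move=> h; apply: le_trans (lerD h (lexx (-1))) _.
  by rewrite addrC lerD2r -subr_ge0 opprK ler_wpDl ?ler01 // ltW.
set c := expR (ln eps / p).
have c0 : 0 < c by apply: expR_gt0.
have Hc : forall z, c <= z -> powR z p <= eps.
  move=> z cz.
  have z0 : 0 < z by apply: lt_le_trans cz.
  rewrite /powR gt_eqF //.
  rewrite -[X in _ <= X](lnK (x:=eps)) ?posrE // ler_expR.
  have -> : ln eps = p * ln c.
    rewrite /c expRK; have h : p != 0 by rewrite lt_eqF.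
    by field.
  by rewrite ler_nM2l // ler_ln ?posrE.
exists (mu0 N Q); split.
- split; [|split].
  + by move=> x y; rewrite /mu0 /muw adjC minnC.
  + move=> x y; rewrite /mu0 /muw; case: (adj N x y) => //.
    exact/ltW/wq_pos.
  + move=> x y; rewrite /mu0 /muw; case: (adj N x y); split => //.
    * by move=> _; apply: wq_pos.
    * by rewrite ltxx.
- exists 1, (Q / (Q - 1)); split => //.
    by rewrite divr_gt0 // subr_gt0.
  move=> n _.
  by rewrite mul1r expRM_natr W_o_eq // geom_bounds.
- exists (uu s c); split; [|split].
  + by move=> x _; rewrite /uu ltr_pwDl // exprn_ge0 // ltW.
  + exists [::], [:: 0%N]; split => //.
      by rewrite /= andbT; apply: leq_trans N2.
    by rewrite /uu /= expr0 expr1 (inj_eq (addrI c)) eq_sym lt_eqF.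
  + move=> x Vx; rewrite qdef.
    case Sx: (size x) => [|k].
      move/size0nil: Sx => ->.
      exact: (pde_root N2 Q m1 s0 s1 eps1 Hc).
    exact: (pde_succ N2 m1 Q0 s0 s1 (erefl eps) Hc Vx Sx).
Qed.
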